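(* Let $(E\to M,\rho,\langle\cdot,\cdot\rangle,\circ)$ be a Courant algebroid and let $(\mathbf I,\mathbf J,\mathbf K)$ be an almost hypercomplex structure on $E$. The following assertions are equivalent: (i) $N_{\mathbf I,\mathbf J}=N_{\mathbf J,\mathbf J}=0$; (ii) $N_{\mathbf I,\mathbf J}=0$; (iii) $(\mathbf I,\mathbf J,\mathbf K)$ is a hypercomplex structure, i.e. all six Nijenhuis concomitants $N_{\mathbf I,\mathbf I},N_{\mathbf J,\mathbf J},N_{\mathbf K,\mathbf K},N_{\mathbf I,\mathbf J},N_{\mathbf J,\mathbf K},N_{\mathbf K,\mathbf I}$ vanish; (iv) there exists a hypercomplex connection $\nabla$ such that $\nabla\mathbf I=\nabla\mathbf J=\nabla\mathbf K=0$ and, for all $X,Y\in\Gamma(E)$, $$T(X,Y)=\mathbf I\,D\langle X,\mathbf I Y\rangle+\mathbf J\,D\langle X,\mathbf J Y\rangle+\mathbf K\,D\langle X,\mathbf K Y\rangle;\qquad(\ast)$$ (v) there exists a hypercomplex connection satisfying $\nabla\mathbf I=\nabla\mathbf J=\nabla\mathbf K=0$ and $(\ast)$; it is unique and given by $$\nabla_XY=-\tfrac12\mathbf K\big(\mathbf JY\circ\mathbf IX-\mathbf J(Y\circ\mathbf IX)-\mathbf I(\mathbf JY\circ X)+\mathbf J\mathbf I(Y\circ X)\big).$$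
   Context: A Courant algebroid $(E\to M,\rho,\langle\cdot,\cdot\rangle,\circ)$ consists of a real vector bundle $E\to M$ over a smooth manifold, a nondegenerate symmetric fiberwise bilinear pairing $\langle\cdot,\cdot\rangle$ on $E$, a vector bundle map $\rho:E\to TM$ (the anchor), and an $\mathbb R$-bilinear operation $\circ$ on $\Gamma(E)$ (the Dorfman bracket) such that for all $f\in C^\infty(M)$, $x,y,z\in\Gamma(E)$: $x\circ(y\circ z)=(x\circ y)\circ z+y\circ(x\circ z)$; $\rho(x\circ y)=[\rho(x),\rho(y)]$; $x\circ(fy)=(\rho(x)f)y+f(x\circ y)$; $x\circ y+y\circ x=2D\langle x,y\rangle$; $(Df)\circ x=0$; $\rho(x)\langle y,z\rangle=\langle x\circ y,z\rangle+\langle y,x\circ z\rangle$. Here $D:C^\infty(M)\to\Gamma(E)$ is the $\mathbb R$-linear map defined by $\langle Df,x\rangle=\tfrac12\rho(x)f$. The Courant bracket is $[\![x,y]\!]=\tfrac12(x\circ y-y\circ x)$, so $x\circ y=[\![x,y]\!]+D\langle x,y\rangle$. For vector bundle endomorphisms $F,G$ of $E$ (over $\mathrm{id}_M$), the Nijenhuis concomitant is the tensor $N_{F,G}:E\otimes E\to E$ given by $N_{F,G}(X,Y)=FX\circ GY-F(X\circ GY)-G(FX\circ Y)+FG(X\circ Y)+GX\circ FY-G(X\circ FY)-F(GX\circ Y)+GF(X\circ Y)$. An almost hypercomplex structure on $E$ is a triple $(\mathbf I,\mathbf J,\mathbf K)$ of vector bundle endomorphisms of $E$ over $\mathrm{id}_M$,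 each orthogonal for $\langle\cdot,\cdot\rangle$, with $\mathbf I^2=\mathbf J^2=\mathbf K^2=\mathbf I\mathbf J\mathbf K=-1$. It is a hypercomplex structure if $N_{\mathbf I,\mathbf I},N_{\mathbf J,\mathbf J},N_{\mathbf K,\mathbf K},N_{\mathbf I,\mathbf J},N_{\mathbf J,\mathbf K},N_{\mathbf K,\mathbf I}$ all vanish. Given an almost hypercomplex structure, for $f\in C^\infty(M)$ and $X,Y\in\Gamma(E)$ set $\Delta_f(X,Y)=\langle X,Y\rangle Df+\langle\mathbf IX,Y\rangle\mathbf I Df+\langle\mathbf JX,Y\rangle\mathbf JDf+\langle\mathbf KX,Y\rangle\mathbf KDf$. A hypercomplex connection is an $\mathbb R$-bilinear map $\Gamma(E)\times\Gamma(E)\to\Gamma(E)$, $(X,Y)\mapsto\nabla_XY$, with $\nabla_{fX}Y=f\nabla_XY$ and $\nabla_X(fY)=(\rho(X)f)Y+f\nabla_XY-\Delta_f(X,Y)$ for all $f,X,Y$. Its torsion is $T(X,Y)=\nabla_XY-\nabla_YX-[\![X,Y]\!]$. For an endomorphism $P$ of $E$, $(\nabla_XP)Y:=\nabla_X(PY)-P(\nabla_XY)$, and $\nabla P=0$ means $(\nabla_XP)Y=0$ for all $X,Y$. *)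

(* Defs.v *)
(* Algebraic (Serre–Swan style) model of a Courant algebroid:
   A  plays the role of C^oo(M) (a commutative R-algebra, R a real field),
   E  plays the role of Gamma(E) (an A-module),
   vector fields are R-linear derivations of A, acting via the anchor. *)
From HB Require Import structures.
From mathcomp Require Import all_boot all_order all_algebra.
Set Implicit Arguments. Unset Strict Implicit. Unset Printing Implicit Defensive.
Import GRing.Theory Num.Theory.
Local Open Scope ring_scope.

Section Defs.
Variables (R : realFieldType) (A : comAlgType R) (E : lmodType A).

Definition half : A := ((2%:R : R)^-1)%:A.

(* A-linear maps E -> E (= vector bundle endomorphisms over id_M) *)
Definition Alinear (F : E -> E) : Prop :=
  forall (f : A) (x y : E), F (f *: x + y) = f *: F x + F y.

Record CourantAlgebroid := {
  pairing : E -> E -> A;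
  anchor  : E -> A -> A;            (* rho(x) acting as a derivation on A *)
  dorf    : E -> E -> E;
  Dop     : A -> E;
  (* pairing: symmetric, A-bilinear, nondegenerate (fiberwise: E ~ E^* ) *)
  pairing_sym : forall x y, pairing x y = pairing y x;
  pairing_lin : forall f x y z, pairing (f *: x + y) z = f * pairing x z + pairing y z;
  pairing_nondeg : forall x, (forall y, pairing x y = 0) -> x = 0;
  pairing_surj : forall phi : E -> A,
      (forall f x y, phi (f *: x + y) = f * phi x + phi y) ->
      exists x, forall y, pairing x y = phi y;
  (* anchor: A-linear bundle map into vector fields = R-linear derivations of A *)
  anchor_lin : forall f x y g, anchor (f *: x + y) g = f * anchor x g + anchor y g;
  anchor_add : forall x g h, anchor x (g + h) = anchor x g + anchor x h;
  anchor_scal : forall x (r : R) g, anchor x (r%:A * g) = r%:A * anchor x g;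
  anchor_leibniz : forall x g h, anchor x (g * h) = anchor x g * h + g * anchor x h;
  dorf_addl : forall x y z, dorf (x + y) z = dorf x z + dorf y z;
  dorf_addr : forall x y z, dorf x (y + z) = dorf x y + dorf x z;
  dorf_scall : forall (r : R) x y, dorf (r%:A *: x) y = r%:A *: dorf x y;
  dorf_scalr : forall (r : R) x y, dorf x (r%:A *: y) = r%:A *: dorf x y;
  ca_jacobi : forall x y z, dorf x (dorf y z) = dorf (dorf x y) z + dorf y (dorf x z);
  ca_anchor_hom : forall x y g,
      anchor (dorf x y) g = anchor x (anchor y g) - anchor y (anchor x g);
  ca_leibniz : forall x y f, dorf x (f *: y) = anchor x f *: y + f *: dorf x y;
  ca_sym : forall x y, dorf x y + dorf y x = 2%:R *: Dop (pairing x y);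
  ca_Dker : forall f x, dorf (Dop f) x = 0;
  ca_invariance : forall x y z,
      anchor x (pairing y z) = pairing (dorf x y) z + pairing y (dorf x z);
  ca_D_def : forall f x, pairing (Dop f) x = half * anchor x f
}.

Variable C : CourantAlgebroid.


Definition courant (x y : E) : E := half *: (dorf C x y - dorf C y x).

Definition nijenhuis (F G : E -> E) (X Y : E) : E :=
  dorf C (F X) (G Y) - F (dorf C X (G Y)) - G (dorf C (F X) Y) + F (G (dorf C X Y))
  + dorf C (G X) (F Y) - G (dorf C X (F Y)) - F (dorf C (G X) Y) + G (F (dorf C X Y)).

Definition nij_vanish (F G : E -> E) : Prop := forall X Y, nijenhuis F G X Y = 0.

Definition orthogonal (F : E -> E) : Prop :=
  forall x y, pairing C (F x) (F y) = pairing C x y.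

Definition almost_hypercomplex (I J K : E -> E) : Prop :=
  [/\ Alinear I, Alinear J, Alinear K,
      (orthogonal I /\ orthogonal J /\ orthogonal K) &
      forall x, [/\ I (I x) = - x, J (J x) = - x, K (K x) = - x & I (J (K x)) = - x]].

Definition hypercomplex (I J K : E -> E) : Prop :=
  almost_hypercomplex I J K /\
  (nij_vanish I I /\ nij_vanish J J /\ nij_vanish K K /\
   nij_vanish I J /\ nij_vanish J K /\ nij_vanish K I).

Definition Delta (I J K : E -> E) (f : A) (X Y : E) : E :=
  pairing C X Y *: Dop C f + pairing C (I X) Y *: I (Dop C f)
  + pairing C (J X) Y *: J (Dop C f) + pairing C (K X) Y *: K (Dop C f).

Definition hypercomplex_connection (I J K : E -> E) (nab : E -> E -> E) : Prop :=
  [/\ (forall X X' Y, nab (X + X') Y = nab X Y + nab X' Y),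
      (forall X Y Y', nab X (Y + Y') = nab X Y + nab X Y'),
      (forall (r : R) X Y, nab X (r%:A *: Y) = r%:A *: nab X Y),
      (forall f X Y, nab (f *: X) Y = f *: nab X Y) &
      (forall f X Y, nab X (f *: Y) = anchor C X f *: Y + f *: nab X Y - Delta I J K f X Y)].

Definition torsion (nab : E -> E -> E) (X Y : E) : E :=
  nab X Y - nab Y X - courant X Y.

Definition parallel (nab : E -> E -> E) (P : E -> E) : Prop :=
  forall X Y, nab X (P Y) - P (nab X Y) = 0.

Definition torsion_star (I J K : E -> E) (nab : E -> E -> E) : Prop :=
  forall X Y, torsion nab X Y =
    I (Dop C (pairing C X (I Y))) + J (Dop C (pairing C X (J Y)))
    + K (Dop C (pairing C X (K Y))).

Definition good_connection (I J K : E -> E) (nab : E -> E -> E) : Prop :=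
  [/\ hypercomplex_connection I J K nab, parallel nab I, parallel nab J,
      parallel nab K & torsion_star I J K nab].

Definition nabla0 (I J K : E -> E) (X Y : E) : E :=
  - (half *: K (dorf C (J Y) (I X) - J (dorf C Y (I X))
                - I (dorf C (J Y) X) + J (I (dorf C Y X)))).

End Defs.

(* Main.v *)
Require Import Defs.
From HB Require Import structures.
From mathcomp Require Import all_boot all_order all_algebra.
Require Import Defs.
Import GRing.Theory Num.Theory.
Local Open Scope ring_scope.
Set Implicit Arguments. Unset Strict Implicit.

Inductive ze := ZAt of nat | Z0 | ZAdd of ze & ze | ZOpp of ze | ZMz of ze & int | ZMn of ze & nat.

Fixpoint addc (c d : seq int) : seq int := match c, d with
  | [::], _ => d | _, [::] => c | a :: c', b :: d' => (a + b) :: addc c' d' end.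
Definition scalc (z : int) (c : seq int) := map (fun a => a * z) c.
Definition atomc n : seq int := rcons (nseq n 0) 1.
Fixpoint normz e := match e with
  | ZAt n => atomc n | Z0 => [::] | ZAdd a b => addc (normz a) (normz b)
  | ZOpp a => scalc (-1) (normz a) | ZMz a z => scalc z (normz a)
  | ZMn a n => scalc n%:Z (normz a) end.
Definition allz (c : seq int) := all (fun a => a == 0) c.

Section ZNorm.
Variable V : zmodType.
Fixpoint zeval (env : seq V) (e : ze) : V := match e with
  | ZAt n => nth 0 env n | Z0 => 0 | ZAdd a b => zeval env a + zeval env b
  | ZOpp a => - zeval env a | ZMz a z => zeval env a *~ z | ZMn a n => zeval env a *+ n end.
Fixpoint evalc (env : seq V) (c : seq int) : V := match c with
  | [::] => 0 | a :: c' => head 0 env *~ a + evalc (behead env) c' end.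
Lemma evalc_add env c d : evalc env (addc c d) = evalc env c + evalc env d.
Proof.
elim: c d env => [|a c IH] [|b d] env /=; rewrite ?addr0 ?add0r //.
by rewrite IH mulrzDr addrACA.
Qed.
Lemma evalc_scal env z c : evalc env (scalc z c) = evalc env c *~ z.
Proof.
elim: c env => [|a c IH] env /=; first by rewrite mul0rz.
by rewrite IH mulrzDl mulrzA.
Qed.
Lemma evalc_atom env n : evalc env (atomc n) = nth 0 env n.
Proof.
elim: n env => [|n IH] env.
  by case: env => [|x env] /=; rewrite mulr1z addr0.
rewrite /atomc /= -/(atomc n) IH mulr0z add0r.
by case: env => [|x env] //=; rewrite nth_nil.
Qed.
Lemma zeval_norm env e : zeval env e = evalc env (normz e).
Proof.
elim: e => [n||a IHa b IHb|a IHa|a IHa z|a IHa n] /=.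
- by rewrite evalc_atom.
- by [].
- by rewrite evalc_add IHa IHb.
- by rewrite evalc_scal IHa -mulrN1z.
- by rewrite evalc_scal IHa.
- by rewrite evalc_scal IHa.
Qed.
Lemma evalc_zero env c : allz c -> evalc env c = 0.
Proof.
elim: c env => [|a c IH] env //= /andP[/eqP -> H]; by rewrite mulr0z add0r IH.
Qed.
Lemma zeval_zero env e : allz (normz e) -> zeval env e = 0.
Proof. by move=> H; rewrite zeval_norm evalc_zero. Qed.
Lemma zcomb (G H : V) (c : int) : H = 0 -> G - H *~ c = 0 -> G = 0.
Proof. by move=> -> ; rewrite mul0rz subr0. Qed.
Lemma zsub (G H : V) : G - H = 0 -> G = H.
Proof. by move/eqP; rewrite subr_eq0 => /eqP. Qed.
Lemma idem0 (x : V) : x = x + x -> x = 0.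
Proof. by move=> h; apply: (addrI x); rewrite addr0 -h. Qed.
End ZNorm.

Ltac zlookup x l := lazymatch l with
 | (?y :: ?l') => match constr:(true) with
     | _ => let r := constr:(ltac:(unify x y; exact 0%N) : nat) in r
     | _ => let n := zlookup x l' in constr:(n.+1) end
end.
Ltac zmem x l := lazymatch l with
 | nil => constr:(false)
 | (?y :: ?l') => match constr:(true) with
     | _ => let r := constr:(ltac:(unify x y; exact true) : bool) in r
     | _ => zmem x l' end
end.
Ltac zcollect t l := lazymatch t with
 | @GRing.add _ ?a ?b => let l1 := zcollect a l in zcollect b l1
 | @GRing.opp _ ?a => zcollect a l
 | @GRing.zero _ => l
 | @intmul _ ?a _ => zcollect a l
 | @GRing.natmul _ ?a _ => zcollect a l
 | _ => let b := zmem t l in lazymatch b with true => l | false => constr:(t :: l) end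
end.
Ltac zreify t l := lazymatch t with
 | @GRing.add _ ?a ?b => let x := zreify a l in let y := zreify b l in constr:(ZAdd x y)
 | @GRing.opp _ ?a => let x := zreify a l in constr:(ZOpp x)
 | @GRing.zero _ => constr:(Z0)
 | @intmul _ ?a ?z => let x := zreify a l in constr:(ZMz x z)
 | @GRing.natmul _ ?a ?n => let x := zreify a l in constr:(ZMn x n)
 | _ => let n := zlookup t l in constr:(ZAt n)
end.
Ltac zsolve0 := lazymatch goal with |- ?t = 0 =>
  let T := type of t in
  let l := zcollect t (@nil T) in
  let e := zreify t l in
  change (@zeval _ l e = 0); apply: zeval_zero; vm_compute; reflexivity end.
Ltac zsolve := apply: zsub; zsolve0.


Section Main.
Variables (R : realFieldType) (A : comAlgType R) (E : lmodType A).
Variable C : CourantAlgebroid E.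

Section Lin.
Variable F : E -> E.
Hypothesis hF : Alinear F.
Lemma linD x y : F (x + y) = F x + F y.
Proof. by have := hF 1 x y; rewrite !scale1r. Qed.
Lemma lin0 : F 0 = 0.
Proof. by apply: idem0; rewrite -linD addr0. Qed.
Lemma linN x : F (- x) = - F x.
Proof. by apply/eqP; rewrite -subr_eq0 opprK -linD addNr lin0. Qed.
Lemma linZ f x : F (f *: x) = f *: F x.
Proof. by have := hF f x 0; rewrite !addr0 lin0 addr0. Qed.
Lemma linMn x n : F (x *+ n) = F x *+ n.
Proof. by elim: n => [|n IH]; rewrite ?mulr0n ?lin0 // !mulrS linD IH. Qed.
End Lin.

Notation dorf := (dorf C).
Notation pairing := (pairing C).
Notation Dop := (Dop C).
Notation anchor := (anchor C).

Lemma pD1 x y z : pairing (x + y) z = pairing x z + pairing y z.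
Proof. by rewrite -[in LHS](scale1r x) pairing_lin mul1r. Qed.
Lemma p01 z : pairing 0 z = 0.
Proof. by apply: idem0; rewrite -pD1 addr0. Qed.
Lemma pN1 x z : pairing (- x) z = - pairing x z.
Proof. by apply/eqP; rewrite -subr_eq0 opprK -pD1 addNr p01. Qed.
Lemma pZ1 f x z : pairing (f *: x) z = f * pairing x z.
Proof. by have := pairing_lin C f x 0 z; rewrite addr0 p01 addr0. Qed.
Lemma pN2 x z : pairing x (- z) = - pairing x z.
Proof. by rewrite pairing_sym pN1 pairing_sym. Qed.
Lemma pD2 x y z : pairing z (x + y) = pairing z x + pairing z y.
Proof. by rewrite pairing_sym pD1 !(pairing_sym _ z). Qed.

Lemma DopD f g : Dop (f + g) = Dop f + Dop g.
Proof.
apply/eqP; rewrite -subr_eq0; apply/eqP; apply: (@pairing_nondeg _ _ _ C) => z.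
by rewrite pD1 pN1 pD1 !ca_D_def anchor_add mulrDr; zsolve0.
Qed.
Lemma Dop0 : Dop 0 = 0.
Proof. by apply: idem0; rewrite -DopD addr0. Qed.
Lemma DopN f : Dop (- f) = - Dop f.
Proof. by apply/eqP; rewrite -subr_eq0 opprK -DopD addNr Dop0. Qed.
Lemma DopM f g : Dop (f * g) = f *: Dop g + g *: Dop f.
Proof.
apply/eqP; rewrite -subr_eq0; apply/eqP; apply: (@pairing_nondeg _ _ _ C) => z.
rewrite pD1 pN1 pD1 !pZ1 !ca_D_def anchor_leibniz.
rewrite mulrDr (mulrCA f) (mulrCA g) (mulrC (anchor z f)); zsolve0.
Qed.

Lemma dorfD1 x y z : dorf (x + y) z = dorf x z + dorf y z. Proof. exact: dorf_addl. Qed.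
Lemma dorfD2 x y z : dorf z (x + y) = dorf z x + dorf z y. Proof. exact: dorf_addr. Qed.
Lemma dorf01 z : dorf 0 z = 0.
Proof. by apply: idem0; rewrite -dorfD1 addr0. Qed.
Lemma dorf02 z : dorf z 0 = 0.
Proof. by apply: idem0; rewrite -dorfD2 addr0. Qed.
Lemma dorfN1 x z : dorf (- x) z = - dorf x z.
Proof. by apply/eqP; rewrite -subr_eq0 opprK -dorfD1 addNr dorf01. Qed.
Lemma dorfN2 x z : dorf z (- x) = - dorf z x.
Proof. by apply/eqP; rewrite -subr_eq0 opprK -dorfD2 addNr dorf02. Qed.
Lemma dorf_sym x y : dorf x y + dorf y x = Dop (pairing x y) *+ 2.
Proof. by rewrite ca_sym scaler_nat. Qed.
Lemma dorfZ1 f x y :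
  dorf (f *: x) y = f *: dorf x y - anchor y f *: x + (pairing x y *: Dop f) *+ 2.
Proof.
have h1 := dorf_sym (f *: x) y.
have h2 := dorf_sym y x.
rewrite ca_leibniz in h1.
have -> : dorf (f *: x) y = Dop (pairing (f *: x) y) *+ 2 - (anchor y f *: x + f *: dorf y x).
  by rewrite -h1 addrK.
have -> : dorf y x = Dop (pairing x y) *+ 2 - dorf x y.
  by rewrite pairing_sym -h2 addrK.
rewrite pZ1 DopM scalerBr -!scalerMnr opprD opprB !mulrnDl.
zsolve.
Qed.

Variables I J K : E -> E.
Hypothesis hIJK : almost_hypercomplex C I J K.
Lemma hI : Alinear I. Proof. by case: hIJK. Qed.
Lemma hJ : Alinear J. Proof. by case: hIJK. Qed.
Lemma hK : Alinear K. Proof. by case: hIJK. Qed.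
Lemma oI : orthogonal C I. Proof. by case: hIJK => _ _ _ []. Qed.
Lemma oJ : orthogonal C J. Proof. by case: hIJK => _ _ _ [] _ []. Qed.
Lemma oK : orthogonal C K. Proof. by case: hIJK => _ _ _ [] _ []. Qed.
Lemma II x : I (I x) = - x. Proof. by case: hIJK => _ _ _ _ /(_ x) []. Qed.
Lemma JJ x : J (J x) = - x. Proof. by case: hIJK => _ _ _ _ /(_ x) []. Qed.
Lemma KK x : K (K x) = - x. Proof. by case: hIJK => _ _ _ _ /(_ x) []. Qed.
Lemma IJK x : I (J (K x)) = - x. Proof. by case: hIJK => _ _ _ _ /(_ x) []. Qed.
Lemma IJ x : I (J x) = K x.
Proof. by have := IJK (K x); rewrite KK (linN hJ) (linN hI) => /oppr_inj. Qed.
Lemma JK x : J (K x) = I x.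
Proof. by have := congr1 I (IJK x); rewrite II (linN hI) => /oppr_inj. Qed.
Lemma JI x : J (I x) = - K x.
Proof. by rewrite -JK JJ. Qed.
Lemma KJ x : K (J x) = - I x.
Proof. by rewrite -IJ JJ (linN hI). Qed.
Lemma IK x : I (K x) = - J x.
Proof. by rewrite -IJ II. Qed.
Lemma KI x : K (I x) = J x.
Proof. by rewrite -IJ JI (linN hI) IK opprK. Qed.
Lemma pI1 a b : pairing (I a) b = - pairing a (I b).
Proof. by rewrite -(oI (I a)) II pN1. Qed.
Lemma pJ1 a b : pairing (J a) b = - pairing a (J b).
Proof. by rewrite -(oJ (J a)) JJ pN1. Qed.
Lemma pK1 a b : pairing (K a) b = - pairing a (K b).
Proof. by rewrite -(oK (K a)) KK pN1. Qed.
Lemma pswap a b : pairing b a = pairing a b.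
Proof. exact: pairing_sym. Qed.

Ltac qn Y := do 5 (rewrite ?(linD hI) ?(linD hJ) ?(linD hK) ?(linN hI) ?(linN hJ) ?(linN hK)
  ?(lin0 hI) ?(lin0 hJ) ?(lin0 hK) ?(linMn hI) ?(linMn hJ) ?(linMn hK)
  ?II ?JJ ?KK ?IJ ?JK ?KI ?JI ?KJ ?IK ?dorfD1 ?dorfD2 ?dorfN1 ?dorfN2
  ?pI1 ?pJ1 ?pK1 ?pN1 ?pN2 ?pD1 ?pD2 ?DopN ?DopD ?opprK ?(pswap _ Y)).

Definition B X Y := dorf (J Y) (I X) - J (dorf Y (I X)) - I (dorf (J Y) X) + J (I (dorf Y X)).
Lemma nabla0E X Y : nabla0 C I J K X Y = - (half A *: K (B X Y)).
Proof. by []. Qed.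

Lemma parJ X Y : K (B X (J Y)) - J (K (B X Y)) = 0.
Proof. rewrite /B; qn Y; zsolve0. Qed.


Ltac qnh Y h := do 5 (rewrite ?(linD hI) ?(linD hJ) ?(linD hK) ?(linN hI) ?(linN hJ) ?(linN hK)
  ?(lin0 hI) ?(lin0 hJ) ?(lin0 hK) ?(linMn hI) ?(linMn hJ) ?(linMn hK)
  ?II ?JJ ?KK ?IJ ?JK ?KI ?JI ?KJ ?IK ?dorfD1 ?dorfD2 ?dorfN1 ?dorfN2
  ?pI1 ?pJ1 ?pK1 ?pN1 ?pN2 ?pD1 ?pD2 ?DopN ?DopD ?opprK ?(pswap _ Y) in h).
Lemma scZC (a b : A) (v : E) : a *: (b *: v) = b *: (a *: v).
Proof. by rewrite !scalerA mulrC. Qed.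
Lemma half2 (v : E) : half A *: (v *+ 2) = v.
Proof.
rewrite -scalerMnr scalerMnl /half scalerMnl -mulr_natr mulVf ?scale1r //.
by rewrite pnatr_eq0.
Qed.
Ltac qs Y := do 5 (rewrite ?(linZ hI) ?(linZ hJ) ?(linZ hK) ?scalerN ?scaleNr ?scalerDr -?scalerMnr ?mulrnDl
  ?(linD hI) ?(linD hJ) ?(linD hK) ?(linN hI) ?(linN hJ) ?(linN hK)
  ?(lin0 hI) ?(lin0 hJ) ?(lin0 hK) ?(linMn hI) ?(linMn hJ) ?(linMn hK)
  ?II ?JJ ?KK ?IJ ?JK ?KI ?JI ?KJ ?IK ?dorfD1 ?dorfD2 ?dorfN1 ?dorfN2 ?dorfZ1 ?ca_leibniz
  ?pI1 ?pJ1 ?pK1 ?pN1 ?pN2 ?pD1 ?pD2 ?DopN ?DopD ?opprK ?(pswap _ Y)).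
Ltac zuse h c := apply: (zcomb (c:=c) h).
Lemma eq0 (a b : E) : a = b -> a - b = 0.
Proof. by move=> ->; rewrite subrr. Qed.

Lemma BaddX X X' Y : B (X + X') Y = B X Y + B X' Y.
Proof. rewrite /B; qn Y; zsolve. Qed.
Lemma BaddY X Y Y' : B X (Y + Y') = B X Y + B X Y'.
Proof. rewrite /B; qn Y; zsolve. Qed.
Lemma BscalR X Y (r : R) : B X (r%:A *: Y) = r%:A *: B X Y.
Proof. rewrite /B !(linZ hJ) !dorf_scall; qs Y; zsolve. Qed.
Lemma BlinA X Y f : B (f *: X) Y = f *: B X Y.
Proof. rewrite /B; qs Y; zsolve. Qed.
Lemma Bleib X Y f : K (B X (f *: Y)) = f *: K (B X Y) + (Delta C I J K f X Y - anchor X f *: Y) *+ 2.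
Proof. rewrite /B /Delta; qs Y; zsolve. Qed.

Section Nij.
Hypothesis hN : nij_vanish C I J.
Lemma parI X Y : K (B X (I Y)) - I (K (B X Y)) = 0.
Proof.
have r1 := congr1 J (hN Y X); rewrite (lin0 hJ) /nijenhuis in r1; qnh Y r1.
have r2 := congr1 K (hN (I Y) X); rewrite (lin0 hK) /nijenhuis in r2; qnh Y r2.
rewrite /B; qn Y. zuse r1 1%:Z; zuse r2 1%:Z; zsolve0.
Qed.
Lemma parK X Y : K (B X (K Y)) - K (K (B X Y)) = 0.
Proof.
have r1 := congr1 I (hN (I Y) X); rewrite (lin0 hI) /nijenhuis in r1; qnh Y r1.
have r2 := hN Y X; rewrite /nijenhuis in r2; qnh Y r2.
rewrite /B; qn Y. zuse r1 (- 1%:Z); zuse r2 1%:Z; zsolve0.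
Qed.
Lemma torB X Y : - K (B X Y) + K (B Y X) - (dorf X Y - dorf Y X)
  - (I (Dop (pairing X (I Y))) + J (Dop (pairing X (J Y))) + K (Dop (pairing X (K Y)))) *+ 2 = 0.
Proof.
have s1 := congr1 J (eq0 (dorf_sym X (J Y))); rewrite (lin0 hJ) in s1; qnh Y s1.
have s2 := congr1 I (eq0 (dorf_sym (I X) Y)); rewrite (lin0 hI) in s2; qnh Y s2.
have s3 := congr1 K (eq0 (dorf_sym (I X) (J Y))); rewrite (lin0 hK) in s3; qnh Y s3.
have r1 := congr1 K (hN X Y); rewrite (lin0 hK) /nijenhuis in r1; qnh Y r1.
rewrite /B; qn Y. zuse s1 1%:Z; zuse s2 (- 1%:Z); zuse r1 1%:Z; zuse s3 (- 1%:Z); zsolve0.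
Qed.
Lemma NJJ : nij_vanish C J J.
Proof.
move=> X Y.
have r0 := congr1 I (hN X (J Y)); rewrite (lin0 hI) /nijenhuis in r0; qnh Y r0.
have r1 := congr1 I (hN (J X) Y); rewrite (lin0 hI) /nijenhuis in r1; qnh Y r1.
have r2 := congr1 K (hN (J X) (J Y)); rewrite (lin0 hK) /nijenhuis in r2; qnh Y r2.
have r3 := congr1 K (hN X Y); rewrite (lin0 hK) /nijenhuis in r3; qnh Y r3.
rewrite /nijenhuis; qn Y. zuse r0 1%:Z; zuse r1 1%:Z; zuse r2 (- 1%:Z); zuse r3 1%:Z; zsolve0.
Qed.
Lemma NII : nij_vanish C I I.
Proof.
move=> X Y.
have r0 := congr1 K (hN X Y); rewrite (lin0 hK) /nijenhuis in r0; qnh Y r0.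
have r1 := congr1 J (hN (I X) Y); rewrite (lin0 hJ) /nijenhuis in r1; qnh Y r1.
have r2 := congr1 K (hN (I X) (I Y)); rewrite (lin0 hK) /nijenhuis in r2; qnh Y r2.
have r3 := congr1 J (hN X (I Y)); rewrite (lin0 hJ) /nijenhuis in r3; qnh Y r3.
rewrite /nijenhuis; qn Y. zuse r0 (- 1%:Z); zuse r1 1%:Z; zuse r2 1%:Z; zuse r3 1%:Z; zsolve0.
Qed.
Lemma NKK : nij_vanish C K K.
Proof.
move=> X Y.
have r0 := hN (I X) (J Y); rewrite /nijenhuis in r0; qnh Y r0.
have r1 := congr1 J (hN (I X) Y); rewrite (lin0 hJ) /nijenhuis in r1; qnh Y r1.
have r2 := congr1 J (hN X (I Y)); rewrite (lin0 hJ) /nijenhuis in r2; qnh Y r2.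
have r3 := congr1 K (hN (I X) (I Y)); rewrite (lin0 hK) /nijenhuis in r3; qnh Y r3.
have r4 := congr1 I (hN (J X) Y); rewrite (lin0 hI) /nijenhuis in r4; qnh Y r4.
have r5 := congr1 I (hN X (J Y)); rewrite (lin0 hI) /nijenhuis in r5; qnh Y r5.
have r6 := congr1 K (hN (J X) (J Y)); rewrite (lin0 hK) /nijenhuis in r6; qnh Y r6.
rewrite /nijenhuis; qn Y. zuse r0 (- 2%:Z); zuse r1 (- 1%:Z); zuse r2 1%:Z; zuse r3 (- 1%:Z); zuse r4 1%:Z; zuse r5 (- 1%:Z); zuse r6 1%:Z; zsolve0.
Qed.
Lemma NJK : nij_vanish C J K.
Proof.
move=> X Y.
have r0 := congr1 J (hN (J X) (J Y)); rewrite (lin0 hJ) /nijenhuis in r0; qnh Y r0.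
rewrite /nijenhuis; qn Y. zuse r0 1%:Z; zsolve0.
Qed.
Lemma NKI : nij_vanish C K I.
Proof.
move=> X Y.
have r0 := congr1 I (hN (I X) (I Y)); rewrite (lin0 hI) /nijenhuis in r0; qnh Y r0.
rewrite /nijenhuis; qn Y. zuse r0 (- 1%:Z); zsolve0.
Qed.
Lemma good0 : good_connection C I J K (nabla0 C I J K).
Proof.
split.
- split.
  + by move=> X X' Y; rewrite !nabla0E BaddX (linD hK) scalerDr opprD.
  + by move=> X Y Y'; rewrite !nabla0E BaddY (linD hK) scalerDr opprD.
  + by move=> r X Y; rewrite !nabla0E BscalR (linZ hK) scZC scalerN.
  + by move=> f X Y; rewrite !nabla0E BlinA (linZ hK) scZC scalerN.
  + move=> f X Y; rewrite !nabla0E Bleib scalerDr half2 scZC scalerN; zsolve.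
- move=> X Y; have e := zsub (parI X Y).
  by rewrite !nabla0E e (linN hI) (linZ hI) subrr.
- move=> X Y; have e := zsub (parJ X Y).
  by rewrite !nabla0E e (linN hJ) (linZ hJ) subrr.
- move=> X Y; have e := zsub (parK X Y).
  by rewrite !nabla0E e (linN hK) (linZ hK) subrr.
- move=> X Y; have e := zsub (torB X Y).
  rewrite /torsion /courant !nabla0E -[RHS]half2 -e.
  apply: zsub; rewrite !scalerDr ?scalerN ?scalerBr; zsolve0.
Qed.
End Nij.

Section Good.
Variable nab : E -> E -> E.
Hypothesis hg : good_connection C I J K nab.
Lemma nab_addY x y y' : nab x (y + y') = nab x y + nab x y'.
Proof. by case: hg => [[]]. Qed.
Lemma nab_linA f x y : nab (f *: x) y = f *: nab x y.
Proof. by case: hg => [[]]. Qed.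
Lemma nabN1 x y : nab (- x) y = - nab x y.
Proof. by rewrite -scaleN1r nab_linA scaleN1r. Qed.
Lemma nabN2 x y : nab x (- y) = - nab x y.
Proof.
have h0 : nab x 0 = 0 by apply: idem0; rewrite -nab_addY addr0.
by apply/eqP; rewrite -subr_eq0 opprK -nab_addY addNr h0.
Qed.
Lemma nabI x y : nab x (I y) = I (nab x y).
Proof. by case: hg => _ h _ _ _; apply/eqP; rewrite -subr_eq0; apply/eqP; apply: h. Qed.
Lemma nabJ x y : nab x (J y) = J (nab x y).
Proof. by case: hg => _ _ h _ _; apply/eqP; rewrite -subr_eq0; apply/eqP; apply: h. Qed.
Lemma nabK x y : nab x (K y) = K (nab x y).
Proof. by case: hg => _ _ _ h _; apply/eqP; rewrite -subr_eq0; apply/eqP; apply: h. Qed.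
Lemma dorf_nab a b : dorf a b = nab a b - nab b a + Dop (pairing a b)
  - (I (Dop (pairing a (I b))) + J (Dop (pairing a (J b))) + K (Dop (pairing a (K b)))).
Proof.
case: hg => _ _ _ _ ht.
have t := ht a b; rewrite /torsion /courant in t.
have db : dorf b a = Dop (pairing a b) *+ 2 - dorf a b.
  by rewrite -(pswap a b) -dorf_sym addrK.
have e : dorf a b - dorf b a = (dorf a b - Dop (pairing a b)) *+ 2 by rewrite db; zsolve.
rewrite e half2 in t.
apply: zsub; zuse (eq0 t) (- 1%:Z); zsolve0.
Qed.
Ltac qg Y := do 5 (rewrite ?nabN1 ?nabN2 ?nabI ?nabJ ?nabK ?(linD hI) ?(linD hJ) ?(linD hK) ?(linN hI) ?(linN hJ) ?(linN hK)
  ?(lin0 hI) ?(lin0 hJ) ?(lin0 hK) ?(linMn hI) ?(linMn hJ) ?(linMn hK)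
  ?II ?JJ ?KK ?IJ ?JK ?KI ?JI ?KJ ?IK
  ?pI1 ?pJ1 ?pK1 ?pN1 ?pN2 ?pD1 ?pD2 ?DopN ?DopD ?opprK ?(pswap _ Y)).
Lemma good_NIJ : nij_vanish C I J.
Proof. move=> X Y; rewrite /nijenhuis !dorf_nab; qg Y; zsolve0. Qed.
Lemma good_NJJ : nij_vanish C J J.
Proof. move=> X Y; rewrite /nijenhuis !dorf_nab; qg Y; zsolve0. Qed.
Lemma good_uniq X Y : nab X Y = nabla0 C I J K X Y.
Proof.
have e : K (B X Y) + nab X Y *+ 2 = 0 by rewrite /B !dorf_nab; qg Y; zsolve0.
have e2 : K (B X Y) = - (nab X Y *+ 2) by apply: zsub; rewrite opprK.
by rewrite nabla0E e2 scalerN opprK half2.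
Qed.
End Good.
End Main.


Unset Implicit Arguments. Set Strict Implicit.

Theorem mainTheorem1 (R : realFieldType) (A : comAlgType R) (E : lmodType A)
    (C : CourantAlgebroid E) (I J K : E -> E)
    (hIJK : almost_hypercomplex C I J K) :
  let P1 := nij_vanish C I J /\ nij_vanish C J J in
  let P2 := nij_vanish C I J in
  let P3 := hypercomplex C I J K in
  let P4 := exists nab, good_connection C I J K nab in
  let P5 := exists nab, good_connection C I J K nab /\
              (forall nab', good_connection C I J K nab' ->
                 forall X Y, nab' X Y = nab X Y) /\
              (forall X Y, nab X Y = nabla0 C I J K X Y) in
  [/\ P1 <-> P2, P1 <-> P3, P1 <-> P4 & P1 <-> P5].
Proof.
move=> P1 P2 P3 P4 P5.
have back : forall nab, good_connection C I J K nab -> P1.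
  by move=> nab hg; split; [exact (good_NIJ hIJK hg) | exact (good_NJJ hIJK hg)].
split.
- split; first by case.
  by move=> h; split=> //; exact (NJJ hIJK h).
- split.
    move=> [h _]; split=> //.
    split; first exact (NII hIJK h).
    split; first exact (NJJ hIJK h).
    split; first exact (NKK hIJK h).
    split; first exact (h).
    split; first exact (NJK hIJK h).
    exact (NKI hIJK h).
  by case=> _ [_ [hJJ [_ [hIJ _]]]]; split.
- split; first by move=> [h _]; exists (nabla0 C I J K); exact (good0 hIJK h).
  by case=> nab hg; exact (back _ hg).
- split; last by case=> nab [hg _]; exact (back _ hg).
  move=> [h _]; exists (nabla0 C I J K); split; first exact (good0 hIJK h).
  split=> // nab' hg X Y; exact (good_uniq hIJK hg X Y).
Qed.
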